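(* Let $Z\subset\mathbb{S}_3$ be a finite nonempty set of points. Then the following are equivalent: (i) $\alpha(Z)=\alpha(2Z)=\alpha(3Z)=\alpha(4Z)=1$; (ii) $Z=\{Q\}$ where $Q$ is the point $E_i\cap\widetilde{L_{ij}}$ for some distinct $i,j\in\{1,2,3\}$.
   Context: Let $P_1,P_2,P_3\in\mathbb{P}^2(\mathbb{C})$ be three general points and $f\colon\mathbb{S}_3\to\mathbb{P}^2$ the blow-up at them, with exceptional curves $E_i=f^{-1}(P_i)$; let $H$ be the pullback of the class of a line and $\mathbb{L}_3=3H-E_1-E_2-E_3=-K_{\mathbb{S}_3}$. For distinct $i,j$, $L_{ij}$ is the line through $P_i,P_j$ and $\widetilde{L_{ij}}$ its proper transform. For a finite set $Z\subset\mathbb{S}_3$ with ideal sheaf $\mathcal{I}_Z$ and a positive integer $m$, $\alpha(mZ)=\min\{d\ge 0:\ H^0(\mathbb{S}_3,d\mathbb{L}_3\otimes\mathcal{I}_Z^{(m)})\neq 0\}$, i.e. the least $d$ such that some effective divisor $D\in|d\mathbb{L}_3|$ has multiplicity at least $m$ at every point of $Z$. *)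

(* Defs.v *)
From HB Require Import structures.
From mathcomp Require Import all_boot all_order all_algebra.
From mathcomp Require Import mpoly.
From mathcomp Require Import complex.
From mathcomp Require Import Rstruct.
From Stdlib Require Rdefinitions.

Set Implicit Arguments.
Unset Strict Implicit.
Unset Printing Implicit Defensive.

Import Order.TTheory GRing.Theory Num.Theory.
Local Open Scope ring_scope.

Definition CC : closedFieldType := (Rdefinitions.R)[i].

Section BlowUp.
Variable C : fieldType.

(* P^2 has homogeneous coordinates x_0, x_1, x_2 and the three
   (general = non-collinear) points are the coordinate points
   P_1 = [1:0:0], P_2 = [0:1:0], P_3 = [0:0:1]  (indices 0,1,2 below).
   The affine chart around P_i is x_i = 1; its two affine coordinates (u, v)
   are the two other coordinates in increasing order of index. *)

Definition chart3 (T : Type) (i : 'I_3) (c a b : T) : 3.-tuple T :=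
  if val i == 0%N then [tuple c; a; b]
  else if val i == 1%N then [tuple a; c; b]
  else [tuple a; b; c].

Definition others (T : Type) (i : 'I_3) (x0 x1 x2 : T) : T * T :=
  if val i == 0%N then (x1, x2)
  else if val i == 1%N then (x0, x2)
  else (x0, x1).

Definition mult0_ge (G : {mpoly C[2]}) (m : nat) : Prop :=
  forall mon : 'X_{1..2}, (mdeg mon < m)%N -> G@_mon = 0.

(* Points of S_3 (representatives).
   - [Off x0 x1 x2] : the point of S_3 over [x0:x1:x2] in P^2 \ {P_1,P_2,P_3};
   - [OnE i a b]   : the point of E_i corresponding to the tangent direction
                     [a:b] at P_i, written in the chart coordinates (u,v) of
                     the affine chart x_i = 1 around P_i. *)
Inductive S3pt : Type :=
  | Off of C & C & C
  | OnE of 'I_3 & C & C.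

Definition valid_pt (Q : S3pt) : Prop :=
  match Q with
  | Off x0 x1 x2 =>
      ~ (x0 = 0 /\ x1 = 0 /\ x2 = 0) /\
      ~ (x1 = 0 /\ x2 = 0) /\ ~ (x0 = 0 /\ x2 = 0) /\ ~ (x0 = 0 /\ x1 = 0)
  | OnE _ a b => ~ (a = 0 /\ b = 0)
  end.

Definition same_pt (Q Q' : S3pt) : Prop :=
  match Q, Q' with
  | Off x0 x1 x2, Off y0 y1 y2 =>
      exists l : C, l != 0 /\ y0 = l * x0 /\ y1 = l * x1 /\ y2 = l * x2
  | OnE i a b, OnE i' a' b' =>
      i = i' /\ exists l : C, l != 0 /\ a' = l * a /\ b' = l * b
  | _, _ => False
  end.

(* The point Q = E_i \cap (proper transform of L_ij): the tangent direction
   at P_i of the line through P_i and P_j, i.e. the chart coordinates of P_j. *)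
Definition pt_E_L (i j : 'I_3) : S3pt :=
  let ej (l : nat) : C := if val j == l then 1 else 0 in
  let d := others i (ej 0%N) (ej 1%N) (ej 2%N) in
  OnE i d.1 d.2.

(* H^0(S_3, d L_3) \ {0}: nonzero forms F of degree 3d with multiplicity
   >= d at each P_i.  Such F defines the effective divisor
   D_F = f^*(V(F)) - d (E_1 + E_2 + E_3) in |d L_3|, and every effective
   divisor of |d L_3| arises this way. *)
Definition in_H0 (d : nat) (F : {mpoly C[3]}) : Prop :=
  F != 0 /\ F \is (3 * d)%N.-homog /\
  forall i : 'I_3, mult0_ge (comp_mpoly (chart3 i 1 'X_0 'X_1) F) d.

Definition multD_ge (d : nat) (F : {mpoly C[3]}) (Q : S3pt) (m : nat) : Prop :=
  match Q with
  | Off x0 x1 x2 =>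
      (* mult_Q(D_F) = multiplicity of F at f(Q); computed in the affine
         chart x_k = 1, where k is the first index with x_k <> 0 *)
      let k : 'I_3 := if x0 != 0 then inord 0 else if x1 != 0 then inord 1
                      else inord 2 in
      let xk := if val k == 0%N then x0 else if val k == 1%N then x1 else x2 in
      let y := others k (x0 / xk) (x1 / xk) (x2 / xk) in
      mult0_ge (comp_mpoly (chart3 k 1 (y.1%:MP + 'X_0) (y.2%:MP + 'X_1)) F) m
  | OnE i a b =>
      (* blow-up charts at P_i (affine coordinates u, v of x_i = 1):
         if a <> 0 : u = X0, v = (b/a + X1) X0, Q = origin, E_i = {X0 = 0};
         if a = 0  : u = (a/b + X0) X1, v = X1,  Q = origin, E_i = {X1 = 0}.
         The pulled back F equals (equation of E_i)^d * H, where H is a local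
         equation of D_F at Q. *)
      if a != 0 then
        exists H : {mpoly C[2]},
          comp_mpoly (chart3 i 1 'X_0 (((b / a)%:MP + 'X_1) * 'X_0)) F
            = 'X_0 ^+ d * H /\ mult0_ge H m
      else
        exists H : {mpoly C[2]},
          comp_mpoly (chart3 i 1 (((a / b)%:MP + 'X_0) * 'X_1) 'X_1) F
            = 'X_1 ^+ d * H /\ mult0_ge H m
  end.

Definition admissible (Z : seq S3pt) (m d : nat) : Prop :=
  exists F : {mpoly C[3]}, in_H0 d F /\ forall Q, List.In Q Z -> multD_ge d F Q m.

Definition alpha_is (Z : seq S3pt) (m k : nat) : Prop :=
  admissible Z m k /\ forall d, (d < k)%N -> ~ admissible Z m d.

End BlowUp.

Arguments Off {C}.
Arguments OnE {C}.

(* Main.v *)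
Require Import Defs.
From HB Require Import structures.
From mathcomp Require Import all_boot all_order all_algebra.
From mathcomp Require Import mpoly.
From mathcomp Require Import complex Rstruct.
From mathcomp Require Import ring zify.
Set Implicit Arguments.
Unset Strict Implicit.
Unset Printing Implicit Defensive.
Import Order.TTheory GRing.Theory Num.Theory.
Local Open Scope ring_scope.

Section Gen.
Variable C : fieldType.

Definition mon2 (k l : nat) : 'X_{1..2} := [multinom [tuple k; l]].
Definition mon3 (a b c : nat) : 'X_{1..3} := [multinom [tuple a; b; c]].

Lemma mon2_eq k l k' l' : (mon2 k l == mon2 k' l') = (k == k') && (l == l').
Proof.
apply/eqP/andP => [/mnmP H|[/eqP-> /eqP->]] //.
by split; apply/eqP; [exact: (H ord0) | exact: (H (@Ordinal 2 1 isT))].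
Qed.

Lemma mon2D a b c d : (mon2 a b + mon2 c d)%MM = mon2 (a + c) (b + d).
Proof. by apply/mnmP => i; rewrite mnmDE; case: i => [[|[|]]]. Qed.

Lemma mdeg_mon2 k l : mdeg (mon2 k l) = (k + l)%N.
Proof. by rewrite mdegE !big_ord_recr big_ord0. Qed.

Lemma mon2_X0 : ('X_0 : {mpoly C[2]}) = 'X_[mon2 1 0].
Proof. by congr mpolyX; apply/mnmP => i; rewrite mnm1E; case: i => [[|[|]]]. Qed.
Lemma mon2_X1 : ('X_1 : {mpoly C[2]}) = 'X_[mon2 0 1].
Proof. by congr mpolyX; apply/mnmP => i; rewrite mnm1E; case: i => [[|[|]]]. Qed.
Lemma mon2_0 : (@mnm0 2) = mon2 0 0.
Proof. by apply/mnmP => i; rewrite mnm0E; case: i => [[|[|]]]. Qed.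


Notation term := (C * (nat * nat))%type.
Definition IL (L : seq term) : {mpoly C[2]} :=
  \sum_(x <- L) x.1 *: 'X_[mon2 x.2.1 x.2.2].
Fixpoint coefL (L : seq term) k l : C :=
  match L with
  | [::] => 0
  | x :: L' => if (x.2.1 == k) && (x.2.2 == l) then x.1 + coefL L' k l
               else coefL L' k l
  end.
Definition mulT (x y : term) : term := (x.1 * y.1, (x.2.1 + y.2.1, x.2.2 + y.2.2)%N).
Fixpoint mulL (L1 L2 : seq term) : seq term :=
  match L1 with
  | [::] => [::]
  | x :: L1' => map (mulT x) L2 ++ mulL L1' L2
  end.
Definition oneL : seq term := [:: (1 : C, (0%N, 0%N))].
Fixpoint powL (L : seq term) n : seq term :=
  match n with 0 => oneL | n'.+1 => mulL L (powL L n') end.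

Lemma IL_nil : IL [::] = 0. Proof. by rewrite /IL big_nil. Qed.
Lemma IL_cons x L : IL (x :: L) = x.1 *: 'X_[mon2 x.2.1 x.2.2] + IL L.
Proof. by rewrite /IL big_cons. Qed.
Lemma IL_cat L1 L2 : IL (L1 ++ L2) = IL L1 + IL L2.
Proof. by rewrite /IL big_cat. Qed.

Lemma coefIL L k l : (IL L)@_(mon2 k l) = coefL L k l.
Proof.
elim: L => [|x L IH]; first by rewrite IL_nil mcoeff0.
rewrite IL_cons mcoeffD mcoeffZ mcoeffX mon2_eq IH /=.
by case: ifP => _; rewrite ?mulr1 ?mulr0 ?add0r.
Qed.

Lemma IL_mulT x L : IL (map (mulT x) L) = (x.1 *: 'X_[mon2 x.2.1 x.2.2]) * IL L.
Proof.
elim: L => [|y L IH]; first by rewrite IL_nil mulr0.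
rewrite /= !IL_cons IH mulrDr; congr (_ + _).
by rewrite /mulT /= -scalerAl -scalerAr scalerA -mpolyXD mon2D.
Qed.

Lemma IL_mul L1 L2 : IL (mulL L1 L2) = IL L1 * IL L2.
Proof.
elim: L1 => [|x L1 IH]; first by rewrite IL_nil mul0r.
by rewrite /= IL_cat IL_mulT IH IL_cons mulrDl.
Qed.

Lemma IL_one : IL oneL = 1.
Proof. by rewrite /oneL IL_cons IL_nil addr0 scale1r /= -mon2_0 mpolyX0. Qed.

Lemma IL_pow L n : IL (powL L n) = IL L ^+ n.
Proof. by elim: n => [|n IH]; rewrite ?IL_one //= IL_mul IH exprS. Qed.

Lemma IL_C c : c%:MP = IL [:: (c, (0%N, 0%N))].
Proof. by rewrite IL_cons IL_nil addr0 /= -mon2_0 mpolyX0 -alg_mpolyC. Qed.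
Lemma IL_X0 : 'X_0 = IL [:: (1 : C, (1%N, 0%N))].
Proof. by rewrite IL_cons IL_nil addr0 /= scale1r mon2_X0. Qed.
Lemma IL_X1 : 'X_1 = IL [:: (1 : C, (0%N, 1%N))].
Proof. by rewrite IL_cons IL_nil addr0 /= scale1r mon2_X1. Qed.
Lemma IL_add L1 L2 : IL L1 + IL L2 = IL (L1 ++ L2).
Proof. by rewrite IL_cat. Qed.
Lemma IL_mul' L1 L2 : IL L1 * IL L2 = IL (mulL L1 L2).
Proof. by rewrite IL_mul. Qed.


Definition M10 : seq 'X_{1..3} :=
  [:: mon3 3 0 0; mon3 2 1 0; mon3 2 0 1; mon3 1 2 0; mon3 1 1 1;
      mon3 1 0 2; mon3 0 3 0; mon3 0 2 1; mon3 0 1 2; mon3 0 0 3].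

Lemma M10_uniq : uniq M10. Proof. by []. Qed.

Lemma mon3E (m : 'X_{1..3}) : m = mon3 (m ord0) (m (@Ordinal 3 1 isT)) (m (@Ordinal 3 2 isT)).
Proof. by apply/mnmP => -[[|[|[|]]] Hi] //=; congr (m _); apply/val_inj. Qed.

Lemma mdeg3_M10 (m : 'X_{1..3}) : mdeg m = 3%N -> m \in M10.
Proof.
rewrite mdegE !big_ord_recr big_ord0 /= add0n (mon3E m).
set a := m _; set b := m _; set c := m _.
move: a b c => a b c.
by case: a => [|[|[|[|a]]]]; case: b => [|[|[|[|b]]]]; case: c => [|[|[|[|c]]]];
  rewrite ?addnS ?addSn.
Qed.

Lemma homog3_decomp (F : {mpoly C[3]}) : F \is 3.-homog ->
  F = \sum_(m <- M10) F@_m *: 'X_[m].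
Proof.
move=> hF; apply/mpolyP => m; rewrite raddf_sum /=.
under eq_bigr do rewrite mcoeffZ mcoeffX.
have [mM|mM] := boolP (m \in M10).
  rewrite (bigD1_seq m) //= eqxx mulr1 big1 ?addr0 // => m' /negbTE.
  by rewrite eq_sym => ->; rewrite mulr0.
rewrite big1_seq; last by move=> m' hm'; rewrite (_ : (m' == m) = false) ?mulr0 //;
  apply: contraNF mM => /eqP <-.
apply: (dhomog_nemf_coeff hF); apply/eqP => /mdeg3_M10; exact/negP.
Qed.

Lemma compX3 (x y z : {mpoly C[2]}) a b c :
  comp_mpoly [tuple x; y; z] 'X_[mon3 a b c] = x ^+ a * y ^+ b * z ^+ c.
Proof. by rewrite comp_mpolyX !big_ord_recr big_ord0 /= mul1r. Qed.


Definition T10 : seq (nat * nat * nat) :=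
  [:: (3,0,0); (2,1,0); (2,0,1); (1,2,0); (1,1,1);
      (1,0,2); (0,3,0); (0,2,1); (0,1,2); (0,0,3)]%N.

Fixpoint sumL (s : seq C) : C :=
  match s with [::] => 0 | [:: x] => x | x :: s' => x + sumL s' end.
Lemma sumLE s : sumL s = \sum_(x <- s) x.
Proof.
elim: s => [|x [|y s] IH]; first by rewrite big_nil.
  by rewrite big_cons big_nil addr0.
by rewrite big_cons -IH.
Qed.
Definition matches k l (x : term) := (x.2.1 == k) && (x.2.2 == l).
Lemma coefLE L k l : coefL L k l = sumL (map fst (filter (matches k l) L)).
Proof.
rewrite sumLE; elim: L => [|x L IH] /=; first by rewrite big_nil.
by rewrite /matches; case: ifP => _; rewrite ?big_cons IH.
Qed.

Lemma sumL_mul c (s : seq term) : c * sumL (map fst s) = sumL (map (fun x => c * x.1) s).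
Proof.
rewrite !sumLE; elim: s => [|x s IH] /=; first by rewrite !big_nil mulr0.
by rewrite !big_cons mulrDr IH.
Qed.
Lemma sumL_flatten (T : Type) (f : T -> seq C) s :
  sumL (flatten (map f s)) = \sum_(t <- s) sumL (f t).
Proof.
elim: s => [|x s IH] /=; first by rewrite big_nil.
by rewrite big_cons sumLE big_cat /= -!sumLE IH.
Qed.

Lemma all10 (P : nat -> nat -> nat -> Prop) :
  P 3 0 0 -> P 2 1 0 -> P 2 0 1 -> P 1 2 0 -> P 1 1 1 -> P 1 0 2 ->
  P 0 3 0 -> P 0 2 1 -> P 0 1 2 -> P 0 0 3 ->
  forall a b c, (a + b + c = 3)%N -> P a b c.
Proof.
move=> h1 h2 h3 h4 h5 h6 h7 h8 h9 h10 a b c.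
by case: a => [|[|[|[|a]]]]; case: b => [|[|[|[|b]]]]; case: c => [|[|[|[|c]]]];
  rewrite ?addnS ?addSn.
Qed.

Definition prod3 Lx Ly Lz (t : nat * nat * nat) :=
  mulL (mulL (powL Lx t.1.1) (powL Ly t.1.2)) (powL Lz t.2).

Lemma coef_comp (F : {mpoly C[3]}) Lx Ly Lz k l : F \is 3.-homog ->
  (comp_mpoly [tuple IL Lx; IL Ly; IL Lz] F)@_(mon2 k l) =
  sumL (flatten [seq map (fun x => F@_(mon3 t.1.1 t.1.2 t.2) * x.1)
                    (filter (matches k l) (prod3 Lx Ly Lz t)) | t <- T10]).
Proof.
move=> hF; rewrite {1}(homog3_decomp hF).
rewrite (_ : M10 = map (fun t => mon3 t.1.1 t.1.2 t.2) T10) // big_map.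
have key : forall t : nat * nat * nat,
  (comp_mpoly [tuple IL Lx; IL Ly; IL Lz] (F@_(mon3 t.1.1 t.1.2 t.2) *: 'X_[mon3 t.1.1 t.1.2 t.2]))@_(mon2 k l)
  = sumL (map (fun x => F@_(mon3 t.1.1 t.1.2 t.2) * x.1)
                    (filter (matches k l) (prod3 Lx Ly Lz t))).
  move=> t; rewrite comp_mpolyZ compX3 -!IL_pow -!IL_mul mcoeffZ coefIL coefLE.
  exact: sumL_mul.
rewrite [comp_mpoly _ _]raddf_sum raddf_sum sumL_flatten.
apply: eq_bigr => t _; exact: key.
Qed.


Lemma chart3_0 T (c a b : T) (H : (0 < 3)%N) : chart3 (Ordinal H) c a b = [tuple c; a; b].
Proof. by []. Qed.
Lemma chart3_1 T (c a b : T) (H : (1 < 3)%N) : chart3 (Ordinal H) c a b = [tuple a; c; b].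
Proof. by []. Qed.
Lemma chart3_2 T (c a b : T) (H : (2 < 3)%N) : chart3 (Ordinal H) c a b = [tuple a; b; c].
Proof. by []. Qed.

Lemma F_zero (F : {mpoly C[3]}) : F \is 3.-homog ->
  (forall a b c, (a + b + c = 3)%N -> F@_(mon3 a b c) = 0) -> F = 0.
Proof.
move=> hF h; rewrite (homog3_decomp hF) big1_seq // => m.
have /allP hT := (isT : all (fun t => t.1.1 + t.1.2 + t.2 == 3)%N T10).
rewrite (_ : M10 = map (fun t => mon3 t.1.1 t.1.2 t.2) T10) //.
by case/mapP => t /hT /eqP ht ->; rewrite h ?scale0r.
Qed.

End Gen.

Ltac simpC := rewrite ?(mulr0, mul0r, mulr1, mul1r, addr0, add0r).
Ltac simpCin H := rewrite ?(mulr1, mul1r, mul0r, add0r, addr0) in H.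
Ltac propagate :=
  repeat match goal with
  | H : @mcoeff _ _ ?m ?p = @GRing.zero _ |- _ =>
     match goal with H' : context[mcoeff m p] |- _ =>
        lazymatch H' with H => fail | _ => rewrite H in H'; simpCin H' end end
  end.
Ltac getE E hF a b := let e := fresh "e" in
  have e := E a%N b%N isT; rewrite (coef_comp _ _ _ _ _ hF) /= in e; simpCin e.

Section Off.
Variable C : fieldType.

Lemma off_zero (F : {mpoly C[3]}) (k : 'I_3) (y1 y2 : C) : F \is 3.-homog ->
  mult0_ge (comp_mpoly (chart3 k 1 (y1%:MP + 'X_0) (y2%:MP + 'X_1)) F) 4 -> F = 0.
Proof.
move=> hF hm.
have E : forall a b, (a + b < 4)%N -> (comp_mpoly (chart3 k 1 (y1%:MP + 'X_0) (y2%:MP + 'X_1)) F)@_(mon2 a b) = 0.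
  by move=> a b h; apply: hm; rewrite mdeg_mon2.
rewrite IL_C IL_X0 IL_X1 (IL_C y2) !IL_add -IL_one in E.
apply: F_zero => //.
clear hm; case: k E => [[|[|[|//]]] Hk] E; rewrite ?chart3_0 ?chart3_1 ?chart3_2 in E.
all: getE E hF (0%N) (0%N); getE E hF (1%N) (0%N); getE E hF (0%N) (1%N); getE E hF (2%N) (0%N); getE E hF (1%N) (1%N); getE E hF (0%N) (2%N);
getE E hF (3%N) (0%N); getE E hF (2%N) (1%N); getE E hF (1%N) (2%N); getE E hF (0%N) (3%N); propagate.
all: by apply: all10.
Qed.
End Off.

Section OnE.
Variable C : fieldType.

Lemma mon3_eq a b c a' b' c' : (mon3 a b c == mon3 a' b' c') = [&& a == a', b == b' & c == c'].
Proof.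
apply/eqP/and3P => [/mnmP H|[/eqP-> /eqP-> /eqP->]] //.
by split; apply/eqP; [exact: (H ord0) | exact: (H (@Ordinal 3 1 isT)) | exact: (H (@Ordinal 3 2 isT))].
Qed.

Lemma H_coef0 (G H : {mpoly C[2]}) p q : G = 'X_0 ^+ 1 * H -> G@_(mon2 p.+1 q) = H@_(mon2 p q).
Proof. by move=> ->; rewrite expr1 mulrC mon2_X0 -[p.+1]add1n -[q]add0n -mon2D mcoeffMX. Qed.
Lemma H_coef1 (G H : {mpoly C[2]}) p q : G = 'X_1 ^+ 1 * H -> G@_(mon2 p q.+1) = H@_(mon2 p q).
Proof. by move=> ->; rewrite expr1 mulrC mon2_X1 -[q.+1]add1n -[p]add0n -mon2D mcoeffMX. Qed.

Lemma inH0_corners (F : {mpoly C[3]}) : in_H0 1 F ->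
  [/\ F@_(mon3 3 0 0) = 0, F@_(mon3 0 3 0) = 0 & F@_(mon3 0 0 3) = 0].
Proof.
case=> _ [hF hc].
have E : forall i : 'I_3, (comp_mpoly (chart3 i 1 'X_0 'X_1) F)@_(mon2 0 0) = 0.
  by move=> i; apply: (hc i); rewrite mdeg_mon2.
rewrite IL_X0 IL_X1 -IL_one in E.
have := E (@Ordinal 3 0 isT); have := E (@Ordinal 3 1 isT); have := E (@Ordinal 3 2 isT).
rewrite chart3_0 chart3_1 chart3_2 !(coef_comp _ _ _ _ _ hF) /=.
by rewrite ?(mulr1, mul1r) => -> -> ->.
Qed.

Lemma F_mono (F : {mpoly C[3]}) a b c : F \is 3.-homog -> (a + b + c = 3)%N ->
  (forall a' b' c', (a' + b' + c' = 3)%N -> (a', b', c') != (a, b, c) -> F@_(mon3 a' b' c') = 0) ->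
  F = F@_(mon3 a b c) *: 'X_[mon3 a b c].
Proof.
move=> hF habc h; rewrite {1}(homog3_decomp hF).
have hM : M10 = map (fun t => mon3 t.1.1 t.1.2 t.2) T10 by [].
have /allP hT := (isT : all (fun t => t.1.1 + t.1.2 + t.2 == 3)%N T10).
have inM : mon3 a b c \in M10.
  by apply: mdeg3_M10; rewrite mdegE !big_ord_recr big_ord0 /= add0n.
rewrite (bigD1_seq _ inM M10_uniq) /= big1_seq ?addr0 // => m /andP [hne].
rewrite hM => /mapP [[[a' b'] c'] /hT /eqP /= hs hm]; rewrite hm /= h ?scale0r //.
by apply/eqP => -[e1 e2 e3]; move: hne; rewrite hm /= e1 e2 e3 eqxx.
Qed.

Lemma lin2 (A B t : C) : A + (B * t + B * t) = 0 -> A * t + B * (t * t) = 0 ->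
  (t = 0 /\ A = 0) \/ (B = 0 /\ A = 0).
Proof.
move=> e1 e2.
have : B * (t * t) = 0.
  have -> : B * (t * t) = (A + (B * t + B * t)) * t - (A * t + B * (t * t)) by ring.
  by rewrite e1 e2 mul0r subr0.
move/eqP; rewrite mulf_eq0 mulf_eq0 orbb => /orP [/eqP B0|/eqP t0].
  by right; split => //; move: e1; rewrite B0 !mul0r !addr0.
by left; split => //; move: e1; rewrite t0 !mulr0 !addr0.
Qed.

Lemma case0a (F : {mpoly C[3]}) (t : C) (H : {mpoly C[2]}) : in_H0 1 F ->
  comp_mpoly (chart3 (@Ordinal 3 0 isT) 1 'X_0 ((t%:MP + 'X_1) * 'X_0)) F = 'X_0 ^+ 1 * H ->
  mult0_ge H 4 -> t = 0 /\ F = F@_(mon3 0 1 2) *: 'X_[mon3 0 1 2].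
Proof.
move=> hF0 hcomp hm; have [c300 c030 c003] := inH0_corners hF0.
have hF := (proj1 (proj2 hF0)).
have E : forall a b, (a + b < 4)%N -> (comp_mpoly (chart3 (@Ordinal 3 0 isT) 1 'X_0 ((t%:MP + 'X_1) * 'X_0)) F)@_(mon2 a.+1 b) = 0.
  by move=> a b h; rewrite (H_coef0 _ _ hcomp); apply: hm; rewrite mdeg_mon2.
rewrite IL_X0 IL_X1 IL_C !IL_add !IL_mul' -IL_one chart3_0 in E.
clear hcomp hm.
getE E hF (0%N) (0%N); getE E hF (1%N) (0%N); getE E hF (0%N) (1%N); getE E hF (2%N) (0%N); getE E hF (1%N) (1%N); getE E hF (1%N) (2%N);
getE E hF (2%N) (1%N); propagate.
have nz := proj1 hF0.
case: (lin2 e5 e2) => [[t0 A0]|[B0 A0]].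
  split => //; apply: F_mono => //; apply: all10 => //= _; assumption.
exfalso; move/eqP: nz; apply; apply: F_zero => //; apply: all10; assumption.
Qed.

Lemma case1a (F : {mpoly C[3]}) (t : C) (H : {mpoly C[2]}) : in_H0 1 F ->
  comp_mpoly (chart3 (@Ordinal 3 1 isT) 1 'X_0 ((t%:MP + 'X_1) * 'X_0)) F = 'X_0 ^+ 1 * H ->
  mult0_ge H 4 -> t = 0 /\ F = F@_(mon3 1 0 2) *: 'X_[mon3 1 0 2].
Proof.
move=> hF0 hcomp hm; have [c300 c030 c003] := inH0_corners hF0.
have hF := (proj1 (proj2 hF0)).
have E : forall a b, (a + b < 4)%N -> (comp_mpoly (chart3 (@Ordinal 3 1 isT) 1 'X_0 ((t%:MP + 'X_1) * 'X_0)) F)@_(mon2 a.+1 b) = 0.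
  by move=> a b h; rewrite (H_coef0 _ _ hcomp); apply: hm; rewrite mdeg_mon2.
rewrite IL_X0 IL_X1 IL_C !IL_add !IL_mul' -IL_one chart3_1 in E.
clear hcomp hm.
getE E hF (0%N) (0%N); getE E hF (1%N) (0%N); getE E hF (0%N) (1%N); getE E hF (2%N) (0%N); getE E hF (1%N) (1%N); getE E hF (1%N) (2%N); getE E hF (2%N) (1%N); getE E hF (0%N) (2%N); propagate.
have nz := proj1 hF0.
case: (lin2 e5 e2) => [[t0 A0]|[B0 A0]].
  split => //; apply: F_mono => //; apply: all10 => //= _; assumption.
exfalso; move/eqP: nz; apply; apply: F_zero => //; apply: all10; assumption.
Qed.

Lemma case2a (F : {mpoly C[3]}) (t : C) (H : {mpoly C[2]}) : in_H0 1 F ->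
  comp_mpoly (chart3 (@Ordinal 3 2 isT) 1 'X_0 ((t%:MP + 'X_1) * 'X_0)) F = 'X_0 ^+ 1 * H ->
  mult0_ge H 4 -> t = 0 /\ F = F@_(mon3 1 2 0) *: 'X_[mon3 1 2 0].
Proof.
move=> hF0 hcomp hm; have [c300 c030 c003] := inH0_corners hF0.
have hF := (proj1 (proj2 hF0)).
have E : forall a b, (a + b < 4)%N -> (comp_mpoly (chart3 (@Ordinal 3 2 isT) 1 'X_0 ((t%:MP + 'X_1) * 'X_0)) F)@_(mon2 a.+1 b) = 0.
  by move=> a b h; rewrite (H_coef0 _ _ hcomp); apply: hm; rewrite mdeg_mon2.
rewrite IL_X0 IL_X1 IL_C !IL_add !IL_mul' -IL_one chart3_2 in E.
clear hcomp hm.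
getE E hF (0%N) (0%N); getE E hF (1%N) (0%N); getE E hF (0%N) (1%N); getE E hF (2%N) (0%N); getE E hF (1%N) (1%N); getE E hF (1%N) (2%N); getE E hF (2%N) (1%N); getE E hF (0%N) (2%N); propagate.
have nz := proj1 hF0.
case: (lin2 e5 e2) => [[t0 A0]|[B0 A0]].
  split => //; apply: F_mono => //; apply: all10 => //= _; assumption.
exfalso; move/eqP: nz; apply; apply: F_zero => //; apply: all10; assumption.
Qed.

Lemma case0b (F : {mpoly C[3]}) (s : C) (H : {mpoly C[2]}) : in_H0 1 F -> s = 0 ->
  comp_mpoly (chart3 (@Ordinal 3 0 isT) 1 ((s%:MP + 'X_0) * 'X_1) 'X_1) F = 'X_1 ^+ 1 * H ->
  mult0_ge H 4 -> F = F@_(mon3 0 2 1) *: 'X_[mon3 0 2 1].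
Proof.
move=> hF0 hs hcomp hm; have [c300 c030 c003] := inH0_corners hF0.
have hF := (proj1 (proj2 hF0)).
rewrite hs mpolyC0 add0r in hcomp.
have E : forall a b, (a + b < 4)%N -> (comp_mpoly (chart3 (@Ordinal 3 0 isT) 1 ('X_0 * 'X_1) 'X_1) F)@_(mon2 a b.+1) = 0.
  by move=> a b h; rewrite (H_coef1 _ _ hcomp); apply: hm; rewrite mdeg_mon2.
rewrite IL_X0 IL_X1 !IL_mul' -IL_one chart3_0 in E.
clear hcomp hm.
getE E hF (0%N) (0%N); getE E hF (1%N) (0%N); getE E hF (0%N) (1%N); getE E hF (2%N) (0%N); getE E hF (1%N) (1%N); getE E hF (1%N) (2%N); getE E hF (2%N) (1%N); getE E hF (0%N) (2%N); propagate.
apply: F_mono => //; apply: all10 => //= _; assumption.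
Qed.

Lemma case1b (F : {mpoly C[3]}) (s : C) (H : {mpoly C[2]}) : in_H0 1 F -> s = 0 ->
  comp_mpoly (chart3 (@Ordinal 3 1 isT) 1 ((s%:MP + 'X_0) * 'X_1) 'X_1) F = 'X_1 ^+ 1 * H ->
  mult0_ge H 4 -> F = F@_(mon3 2 0 1) *: 'X_[mon3 2 0 1].
Proof.
move=> hF0 hs hcomp hm; have [c300 c030 c003] := inH0_corners hF0.
have hF := (proj1 (proj2 hF0)).
rewrite hs mpolyC0 add0r in hcomp.
have E : forall a b, (a + b < 4)%N -> (comp_mpoly (chart3 (@Ordinal 3 1 isT) 1 ('X_0 * 'X_1) 'X_1) F)@_(mon2 a b.+1) = 0.
  by move=> a b h; rewrite (H_coef1 _ _ hcomp); apply: hm; rewrite mdeg_mon2.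
rewrite IL_X0 IL_X1 !IL_mul' -IL_one chart3_1 in E.
clear hcomp hm.
getE E hF (0%N) (0%N); getE E hF (1%N) (0%N); getE E hF (0%N) (1%N); getE E hF (2%N) (0%N); getE E hF (1%N) (1%N); getE E hF (1%N) (2%N); getE E hF (2%N) (1%N); getE E hF (0%N) (2%N); propagate.
apply: F_mono => //; apply: all10 => //= _; assumption.
Qed.

Lemma case2b (F : {mpoly C[3]}) (s : C) (H : {mpoly C[2]}) : in_H0 1 F -> s = 0 ->
  comp_mpoly (chart3 (@Ordinal 3 2 isT) 1 ((s%:MP + 'X_0) * 'X_1) 'X_1) F = 'X_1 ^+ 1 * H ->
  mult0_ge H 4 -> F = F@_(mon3 2 1 0) *: 'X_[mon3 2 1 0].
Proof.
move=> hF0 hs hcomp hm; have [c300 c030 c003] := inH0_corners hF0.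
have hF := (proj1 (proj2 hF0)).
rewrite hs mpolyC0 add0r in hcomp.
have E : forall a b, (a + b < 4)%N -> (comp_mpoly (chart3 (@Ordinal 3 2 isT) 1 ('X_0 * 'X_1) 'X_1) F)@_(mon2 a b.+1) = 0.
  by move=> a b h; rewrite (H_coef1 _ _ hcomp); apply: hm; rewrite mdeg_mon2.
rewrite IL_X0 IL_X1 !IL_mul' -IL_one chart3_2 in E.
clear hcomp hm.
getE E hF (0%N) (0%N); getE E hF (1%N) (0%N); getE E hF (0%N) (1%N); getE E hF (2%N) (0%N); getE E hF (1%N) (1%N); getE E hF (1%N) (2%N); getE E hF (2%N) (1%N); getE E hF (0%N) (2%N); propagate.
apply: F_mono => //; apply: all10 => //= _; assumption.
Qed.

End OnE.

Section Conv.
Variable C : fieldType.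

Lemma mon2E (m : 'X_{1..2}) : m = mon2 (m ord0) (m (@Ordinal 2 1 isT)).
Proof. by apply/mnmP => -[[|[|]] Hi] //=; congr (m _); apply/val_inj. Qed.

Lemma X2pow p q : ('X_0 ^+ p * 'X_1 ^+ q : {mpoly C[2]}) = 'X_[mon2 p q].
Proof.
rewrite mon2_X0 mon2_X1 !mpolyXn -mpolyXD; congr mpolyX.
by apply/mnmP => -[[|[|]] Hi] //=; rewrite mnmDE !mulmnE /= ?muln0 ?mul1n ?addn0.
Qed.

Lemma multX22 m : (m <= 4)%N -> mult0_ge ('X_[mon2 2 2] : {mpoly C[2]}) m.
Proof.
move=> hm mon hd; rewrite mcoeffX; case: eqP => // e.
by move: hd; rewrite -e mdeg_mon2 ltnNge hm.
Qed.

Lemma mult_mono (H : {mpoly C[2]}) m m' : (m' <= m)%N -> mult0_ge H m -> mult0_ge H m'.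
Proof. by move=> hm h mon hd; apply: h; exact: leq_trans hd hm. Qed.

Lemma X2mult p q : (0 < p + q)%N -> mult0_ge ('X_[mon2 p q] : {mpoly C[2]}) 1.
Proof.
move=> hpq mon; rewrite ltnS leqn0 mcoeffX => hd; case: eqP => // e.
by move: hd; rewrite -e mdeg_mon2 => /eqP h; rewrite h in hpq.
Qed.

Lemma mdeg_mon3 a b c : mdeg (mon3 a b c) = (a + b + c)%N.
Proof. by rewrite mdegE !big_ord_recr big_ord0 /= add0n. Qed.

Lemma inH0_mon a b c : (a + b + c = 3)%N -> (a < 3)%N -> (b < 3)%N -> (c < 3)%N ->
  in_H0 1 ('X_[mon3 a b c] : {mpoly C[3]}).
Proof.
move=> habc ha hb hc; split; [|split].
- apply/eqP => /(congr1 (mcoeff (mon3 a b c))); rewrite mcoeffX eqxx mcoeff0.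
  by move/eqP; rewrite oner_eq0.
- by rewrite dhomogX /= mdeg_mon3 habc.
- move=> [[|[|[|//]]] Hk]; rewrite ?chart3_0 ?chart3_1 ?chart3_2 compX3 expr1n ?mul1r ?mulr1;
  rewrite X2pow; apply: X2mult; lia.
Qed.

Definition tgt (i j : 'I_3) : 'X_{1..3} :=
  [multinom (if l == i then 0 else if l == j then 1 else 2)%N | l < 3].

Lemma tgt_in (i j : 'I_3) : i != j -> in_H0 1 'X_[C, tgt i j].
Proof.
have -> : tgt i j = mon3 (tgt i j ord0) (tgt i j (@Ordinal 3 1 isT)) (tgt i j (@Ordinal 3 2 isT)) by exact: mon3E.
rewrite !mnmE.
by case: i => [[|[|[|//]]] Hi]; case: j => [[|[|[|//]]] Hj] //= _; apply: inH0_mon.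
Qed.

Lemma L0 (l a : C) : l != 0 -> 0 = l * a -> a = 0.
Proof. by move=> l0 /esym/eqP; rewrite mulf_eq0 (negbTE l0) => /eqP. Qed.
Lemma L1 (l a : C) : 1 = l * a -> a != 0.
Proof. by move=> e; apply/eqP => a0; move: e; rewrite a0 mulr0 => /eqP; rewrite oner_eq0. Qed.

Lemma conv_mult (i j : 'I_3) (Q : S3pt C) m : i != j -> same_pt Q (pt_E_L C i j) ->
  (m <= 4)%N -> multD_ge 1 'X_[C, tgt i j] Q m.
Proof.
move=> hij; case: Q => [x0 x1 x2 | i' a b] //= [->] [l [l0 [ea eb]]] hm.
have -> : tgt i j = mon3 (tgt i j ord0) (tgt i j (@Ordinal 3 1 isT)) (tgt i j (@Ordinal 3 2 isT)) by exact: mon3E.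
rewrite !mnmE.
case: i hij ea eb => [[|[|[|//]]] Hi]; case: j => [[|[|[|//]]] Hj] //= _ ea eb;
(first [ have a0 := L0 l0 ea | have a0 := L1 ea ]);
(first [ have b0 := L0 l0 eb | have b0 := L1 eb ]);
rewrite ?a0 ?b0 ?eqxx /= ?mul0r mpolyC0 add0r; exists 'X_[mon2 2 2];
(split; last exact: multX22);
rewrite ?chart3_0 ?chart3_1 ?chart3_2 compX3 -X2pow; ring.
Qed.

Lemma noadm0 (Z : seq (S3pt C)) m : Z <> [::] -> (0 < m)%N -> ~ admissible Z m 0.
Proof.
case: Z => [//|Q Z] _ hm [F [[nz [hF _]] hQ]].
have FC : F = (F@_0%MM)%:MP.
  apply/mpolyP => mm; rewrite mcoeffC.
  have [->|ne] := eqVneq mm 0%MM; first by rewrite mulr1.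
  rewrite mulr0; apply: (dhomog_nemf_coeff hF).
  by rewrite /= muln0 mdeg_eq0.
have c0 : F@_0%MM != 0 by apply: contra nz; rewrite {2}FC => /eqP ->; rewrite mpolyC0.
have := hQ Q (or_introl erefl); clear hQ; rewrite FC.
case: Q => [x0 x1 x2|i a b] /=.
  move=> /(_ 0%MM); rewrite comp_mpolyC mcoeffC eqxx mulr1 mdeg0 => /(_ hm) e.
  by rewrite e eqxx in c0.
case: ifP => _ [H [eH hH]]; rewrite comp_mpolyC expr0 mul1r in eH;
  move: (hH 0%MM); rewrite -eH mcoeffC eqxx mulr1 mdeg0 => /(_ hm) e;
  by rewrite e eqxx in c0.
Qed.

End Conv.

Section Key.
Variable C : fieldType.

Lemma tgtE (i j : 'I_3) : tgt i j = mon3 (tgt i j ord0) (tgt i j (@Ordinal 3 1 isT)) (tgt i j (@Ordinal 3 2 isT)).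
Proof. exact: mon3E. Qed.

Lemma tgt_inj (i j i0 j0 : 'I_3) : i != j -> i0 != j0 -> tgt i j = tgt i0 j0 -> i = i0 /\ j = j0.
Proof.
rewrite (tgtE i j) (tgtE i0 j0) !mnmE => + + /eqP; rewrite mon3_eq.
case: i => [[|[|[|//]]] Hi]; case: j => [[|[|[|//]]] Hj];
case: i0 => [[|[|[|//]]] Hi0]; case: j0 => [[|[|[|//]]] Hj0] //= _ _ _;
by split; apply/val_inj.
Qed.

Lemma key_pt (F : {mpoly C[3]}) (Q : S3pt C) : valid_pt Q -> in_H0 1 F -> multD_ge 1 F Q 4 ->
  exists i j : 'I_3, i != j /\ same_pt Q (pt_E_L C i j) /\ F = F@_(tgt i j) *: 'X_[tgt i j].
Proof.
move=> hv hF0 hm; have nz := proj1 hF0; have hF := proj1 (proj2 hF0).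
case: Q hv hm => [x0 x1 x2 | i a b] hv hm.
  rewrite /multD_ge in hm; cbv zeta in hm.
  by exfalso; move/eqP: nz; apply; exact: (off_zero hF hm).
case: i hv hm => [[|[|[|//]]] Hi] hv hm; have e := bool_irrelevance Hi isT; subst Hi;
rewrite /multD_ge in hm; (have [a0|an0] := eqVneq a 0;
[ rewrite a0 eqxx in hm; subst a; have b0 : b != 0 by apply/eqP => b0; apply: hv
| rewrite an0 in hm ]);
case: hm => H [e1 e2].
- have hFe := case0b hF0 (mul0r _) e1 e2.
  exists (@Ordinal 3 0 isT), (@Ordinal 3 2 isT).
  have -> : tgt (@Ordinal 3 0 isT) (@Ordinal 3 2 isT) = mon3 0 2 1 by rewrite tgtE !mnmE.
  split; first by [].
  split; last exact: hFe.
  rewrite /pt_E_L /others /=; split => //; by exists b^-1; rewrite invr_eq0 b0 mulr0 mulVf.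
- have [t0 hFe] := case0a hF0 e1 e2.
  have b0 : b = 0 by move/eqP: t0; rewrite mulf_eq0 invr_eq0 (negbTE an0) orbF => /eqP.
  exists (@Ordinal 3 0 isT), (@Ordinal 3 1 isT).
  have -> : tgt (@Ordinal 3 0 isT) (@Ordinal 3 1 isT) = mon3 0 1 2 by rewrite tgtE !mnmE.
  split; first by [].
  split; last exact: hFe.
  rewrite /pt_E_L /others /=; split => //; by exists a^-1; rewrite invr_eq0 an0 b0 mulr0 mulVf.
- have hFe := case1b hF0 (mul0r _) e1 e2.
  exists (@Ordinal 3 1 isT), (@Ordinal 3 2 isT).
  have -> : tgt (@Ordinal 3 1 isT) (@Ordinal 3 2 isT) = mon3 2 0 1 by rewrite tgtE !mnmE.
  split; first by [].
  split; last exact: hFe.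
  rewrite /pt_E_L /others /=; split => //; by exists b^-1; rewrite invr_eq0 b0 mulr0 mulVf.
- have [t0 hFe] := case1a hF0 e1 e2.
  have b0 : b = 0 by move/eqP: t0; rewrite mulf_eq0 invr_eq0 (negbTE an0) orbF => /eqP.
  exists (@Ordinal 3 1 isT), (@Ordinal 3 0 isT).
  have -> : tgt (@Ordinal 3 1 isT) (@Ordinal 3 0 isT) = mon3 1 0 2 by rewrite tgtE !mnmE.
  split; first by [].
  split; last exact: hFe.
  rewrite /pt_E_L /others /=; split => //; by exists a^-1; rewrite invr_eq0 an0 b0 mulr0 mulVf.
- have hFe := case2b hF0 (mul0r _) e1 e2.
  exists (@Ordinal 3 2 isT), (@Ordinal 3 1 isT).
  have -> : tgt (@Ordinal 3 2 isT) (@Ordinal 3 1 isT) = mon3 2 1 0 by rewrite tgtE !mnmE.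
  split; first by [].
  split; last exact: hFe.
  rewrite /pt_E_L /others /=; split => //; by exists b^-1; rewrite invr_eq0 b0 mulr0 mulVf.
- have [t0 hFe] := case2a hF0 e1 e2.
  have b0 : b = 0 by move/eqP: t0; rewrite mulf_eq0 invr_eq0 (negbTE an0) orbF => /eqP.
  exists (@Ordinal 3 2 isT), (@Ordinal 3 0 isT).
  have -> : tgt (@Ordinal 3 2 isT) (@Ordinal 3 0 isT) = mon3 1 2 0 by rewrite tgtE !mnmE.
  split; first by [].
  split; last exact: hFe.
  rewrite /pt_E_L /others /=; split => //; by exists a^-1; rewrite invr_eq0 an0 b0 mulr0 mulVf.
Qed.

End Key.

Unset Implicit Arguments.

Theorem theorem8 (Z : seq (S3pt CC)) :
  (forall Q, List.In Q Z -> valid_pt Q) -> Z <> [::] ->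
  ((alpha_is Z 1 1 /\ alpha_is Z 2 1 /\ alpha_is Z 3 1 /\ alpha_is Z 4 1) <->
   exists i j : 'I_3, i <> j /\ forall Q, List.In Q Z -> same_pt Q (pt_E_L CC i j)).
Proof.
move=> hv hZ; split.
  move=> [_ [_ [_ [[F [hF0 hQ]] _]]]].
  case: Z hv hZ hQ => [//|Q0 Z] hv _ hQ.
  have [i0 [j0 [hij0 [hs0 hF0e]]]] := key_pt (hv Q0 (or_introl erefl)) hF0 (hQ Q0 (or_introl erefl)).
  exists i0, j0; split; first by apply/eqP.
  move=> Q hQin.
  have [i [j [hij [hs hFe]]]] := key_pt (hv Q hQin) hF0 (hQ Q hQin).
  suff [ei ej] : i = i0 /\ j = j0 by rewrite -ei -ej.
  apply: tgt_inj => //.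
  have nzc : F@_(tgt i j) != 0.
    by apply: contra (proj1 hF0) => /eqP c0; rewrite hFe c0 scale0r.
  move: nzc; rewrite {1}hF0e mcoeffZ mcoeffX.
  by case: (eqVneq (tgt i0 j0) (tgt i j)) => [-> //|ne]; rewrite mulr0n mulr0 eqxx.
move=> [i [j [hij hQ]]].
have hij' : i != j by apply/eqP.
have adm : forall m, (0 < m <= 4)%N -> alpha_is Z m 1.
  move=> m /andP [m0 m4]; split.
    exists 'X_[CC, tgt i j]; split; first exact: tgt_in.
    by move=> Q hQin; apply: conv_mult => //; apply: hQ.
  by move=> d; rewrite ltnS leqn0 => /eqP ->; apply: noadm0.
by split; [|split; [|split]]; apply: adm.
Qed.
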